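(* Let $A$ and $G$ be cubic graphs. Then every graph $G\circ A^-$ has girth at least the girth $g(A)$ of $A$.
   Context: Let $G$ and $A$ be $3$-regular (simple) graphs, let $a$ be a vertex of $A$ and $A^-=A-a$. A graph $G\circ A^-$ is any graph obtained by replacing each vertex $v$ of $G$ by a copy $A^-_v$ of $A^-$ and, for each edge $uv$ of $G$, adding an edge joining a vertex of degree $2$ of $A^-_u$ to a vertex of degree $2$ of $A^-_v$, so that each degree-$2$ vertex of each copy is incident with exactly one added edge (the choices of $a$ and of these edges are arbitrary). *)

(* Defs.v *)
From mathcomp Require Import all_boot.
Set Implicit Arguments. Unset Strict Implicit. Unset Printing Implicit Defensive.

Definition simple_graph (T : finType) (e : rel T) : Prop :=
  symmetric e /\ irreflexive e.

Definition deg (T : finType) (e : rel T) (x : T) : nat := #|[set y | e x y]|.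

Definition cubic (T : finType) (e : rel T) : Prop :=
  simple_graph e /\ forall x, deg e x = 3.

Definition is_cycle (T : finType) (e : rel T) (s : seq T) : bool :=
  [&& 3 <= size s, uniq s & cycle e s].

Definition girth_at_least (T : finType) (e : rel T) (g : nat) : Prop :=
  forall s, is_cycle e s -> g <= size s.

Definition is_girth (T : finType) (e : rel T) (g : nat) : Prop :=
  (exists s, is_cycle e s /\ size s = g) /\ girth_at_least e g.

Definition Aminus (TA : finType) (a : TA) := {x : TA | x != a}.

Definition eAminus (TA : finType) (eA : rel TA) (a : TA) : rel (Aminus a) :=
  fun x y => eA (val x) (val y).

(* M is a valid set of added edges for G o A^- (vertex set VG * A^-):
   each added edge joins degree-2 vertices of copies A^-_u, A^-_v with uv in G,
   each edge uv of G receives exactly one added edge, and each degree-2 vertex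
   of each copy is incident with exactly one added edge. *)
Definition added_edges (TG TA : finType) (eG : rel TG) (eA : rel TA) (a : TA)
    (M : rel (TG * Aminus a)) : Prop :=
  symmetric M /\
  (forall p q, M p q ->
     [/\ eG p.1 q.1, deg (@eAminus TA eA a) p.2 = 2 & deg (@eAminus TA eA a) q.2 = 2]) /\
  (forall u v, eG u v ->
     #|[set xy : Aminus a * Aminus a | M (u, xy.1) (v, xy.2)]| = 1) /\
  (forall v (x : Aminus a), deg (@eAminus TA eA a) x = 2 ->
     #|[set q | M (v, x) q]| = 1).

Definition compose_graph (TG TA : finType) (eA : rel TA) (a : TA)
    (M : rel (TG * Aminus a)) : rel (TG * Aminus a) :=
  fun p q => ((p.1 == q.1) && @eAminus TA eA a p.2 q.2) || M p q.

(* Main.v *)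
Require Import Defs.
From mathcomp Require Import all_boot.

Section Helpers.
Variables (TG TA : finType) (eG : rel TG) (eA : rel TA) (a : TA)
  (M : rel (TG * Aminus a)).

Definition Irel : rel (TG * Aminus a) :=
  fun p q => (p.1 == q.1) && eAminus eA p.2 q.2.

Lemma seg x u : path (compose_graph eA M) x u ->
  path Irel x u \/ exists u1 y u2, u = u1 ++ y :: u2 /\ path Irel x u1 /\ M (last x u1) y.
Proof.
elim: u x => [|y u IH] x /=; first by left.
case/andP=> hxy hp.
have [Mxy|nM] := boolP (M x y).
  by right; exists [::], y, u.
have Ixy : Irel x y by move: hxy; rewrite /compose_graph (negbTE nM) orbF.
case: (IH y hp) => [hI|[u1 [z [u2 [-> [hI hM]]]]]].
  by left; rewrite /= Ixy hI.
by right; exists (y :: u1), z, u2; rewrite /= Ixy hI.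
Qed.

Lemma allI x u : path Irel x u -> forall y, y \in x :: u -> y.1 = x.1.
Proof.
elim: u x => [|z u IH] x /=.
  by move=> _ y; rewrite inE => /eqP->.
case/andP=> /andP[/eqP h1 _] hp y; rewrite inE => /orP[/eqP->//|hy].
by rewrite (IH z hp y hy) h1.
Qed.

Lemma uniq_mapf w v : (forall y, y \in w -> y.1 = v) -> uniq w ->
  uniq (map (fun p : TG * Aminus a => val p.2) w).
Proof.
move=> h uw; rewrite map_inj_in_uniq // => p q hp hq /val_inj h2.
move: (h p hp) (h q hq) h2.
by case: p {hp} => ??; case: q {hq} => ?? /= -> -> ->.
Qed.

Lemma deg2_adj (cA : cubic eA) (x : Aminus a) :
  deg (@eAminus TA eA a) x = 2 -> eA (val x) a.
Proof.
move=> h2; apply/negPn/negP => hna.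
case: cA => _ /(_ (val x)); rewrite /deg.
have -> : [set y | eA (val x) y] = val @: [set y : Aminus a | @eAminus TA eA a x y].
  apply/setP=> y; rewrite inE; apply/idP/imsetP.
  - move=> hy; have ya : y != a by apply: contraNneq hna => ya; by move: hy; rewrite ya.
    by exists (exist _ y ya) => //; rewrite inE.
  - by case=> z; rewrite inE => hz ->.
rewrite card_imset; last exact: val_inj.
by move: h2; rewrite /deg => ->.
Qed.

Lemma Muniq (hM : added_edges eG eA M) p q1 q2 : M p q1 -> M p q2 -> q1 = q2.
Proof.
case: hM => _ [hd [_ hc]] h1 h2.
have [_ d2 _] := hd _ _ h1.
move: (hc p.1 p.2 d2); rewrite -surjective_pairing => /eqP/cards1P[q hq].
have : q1 \in [set q | M p q] by rewrite inE.
have : q2 \in [set q | M p q] by rewrite inE.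
by rewrite hq !inE => /eqP-> /eqP->.
Qed.

End Helpers.
Arguments Irel {TG TA} eA {a}.
Arguments seg {TG TA eA a M x u}.
Arguments allI {TG TA eA a x u} _ {y}.
Arguments uniq_mapf {TG TA a w v}.
Arguments deg2_adj {TA eA a} cA {x}.
Arguments Muniq {TG TA eG eA a M} hM {p q1 q2}.

Lemma prev_at_last (T : eqType) (x : T) t y : x \notin t -> prev_at x x y t = last y t.
Proof.
elim: t y => [|z t IH] y /=; first by rewrite eqxx.
rewrite inE negb_or => /andP[/negbTE -> hx]; exact: IH.
Qed.

Lemma prev_head (T : eqType) (x : T) t : x \notin t -> prev (x :: t) x = last x t.
Proof. exact: prev_at_last. Qed.

Theorem proposition5p17 (TG TA : finType) (eG : rel TG) (eA : rel TA)
    (a : TA) (M : rel (TG * Aminus a)) (gA : nat) :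
  cubic eG -> cubic eA -> added_edges eG eA M -> is_girth eA gA ->
  girth_at_least (compose_graph eA M) gA.
Proof.
move=> cG cA hM [_ gir] s /and3P[s3 us cs].
set f := fun p : TG * Aminus a => val p.2.
have fI : forall p q, Irel eA p q -> eA (f p) (f q) by move=> p q /andP[].
have irrG : forall u, ~~ eG u u by move=> u; case: cG => [[_ ->]].
have hMd := hM.2.1.
case: (boolP (has (fun p => M (prev s p) p) s)) => [/hasP[p0 p0s Mp0]|nh].
- case: (rot_to p0s) => i t Hrot.
  have uc : uniq (p0 :: t) by rewrite -Hrot rot_uniq.
  have cc : cycle (compose_graph eA M) (p0 :: t) by rewrite -Hrot rot_cycle.
  have sz : size s = (size t).+1 by rewrite -(size_rot i) Hrot.
  have Ml : M (last p0 t) p0.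
    by rewrite -prev_head ?(andP uc).1 // -Hrot prev_rot.
  move: cc; rewrite /= rcons_path => /andP[pt _].
  case: (seg pt) => [hI|[u1 [y [u2 [Et [hI hMy]]]]]].
    have [hG _ _] := hMd _ _ Ml.
    by move: hG; rewrite (allI hI (mem_last p0 t)) (negbTE (irrG _)).
  have [_ _ d0] := hMd _ _ Ml.
  have [_ dz _] := hMd _ _ hMy.
  case: u1 Et hI hMy dz => [|w u1] Et hI hMy dz.
    have Ms : M p0 (last p0 t) by rewrite hM.1.
    have ey := Muniq hM hMy Ms.
    move: uc sz s3 ey; rewrite Et /=.
    case: u2 {Et} => [|w u2] /=; first by move=> _ ->.
    rewrite !inE negb_or => /andP[_ /andP[hy _]] _ _ ey.
    by move: hy; rewrite ey; case/negP; apply: mem_last.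
  have hall : forall q, q \in p0 :: w :: u1 -> q.1 = p0.1 by move=> q hq; exact: (allI hI hq).
  have up : uniq (p0 :: w :: u1).
    by move: uc; rewrite Et -cat_cons cat_uniq => /andP[].
  have le : (size (p0 :: w :: u1)).+1 <= size s by rewrite sz Et size_cat /= addnS !ltnS leq_addr.
  suff H : gA <= (size (p0 :: w :: u1)).+1 by exact: leq_trans H le.
  have -> : (size (p0 :: w :: u1)).+1 = size (a :: map f (p0 :: w :: u1)) by rewrite /= size_map.
  apply: gir; rewrite /is_cycle.
  have symA : symmetric eA by case: cA => [[]].
  apply/and3P; split.
  - by rewrite /= size_map.
  - rewrite cons_uniq (uniq_mapf hall up) andbT.
    apply/mapP => [[q _ hq]]; have := valP q.2.
    by rewrite /f in hq; rewrite -hq eqxx.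
  - have P1 : eA a (f p0).
      by rewrite symA; exact: (deg2_adj cA d0).
    have P2 : path eA (f p0) (map f (w :: u1)).
      by rewrite path_map; apply: sub_path hI => p q /fI.
    have P3 : eA (f (last p0 (w :: u1))) a by exact: (deg2_adj cA dz).
    have P4 : path eA a (map f (p0 :: w :: u1)).
      by apply/andP; split.
    have L : last a (map f (p0 :: w :: u1)) = f (last p0 (w :: u1)) :=
      last_map f (w :: u1) p0.
    change (path eA a (rcons (map f (p0 :: w :: u1)) a)).
    by rewrite rcons_path P4 L P3.

- have cI : cycle (Irel eA) s.
    apply: cycle_from_prev => // x hx.
    have := prev_cycle cs hx; rewrite /compose_graph.
    by rewrite (negbTE (hasPn nh x hx)) orbF.
  case: s s3 us cs nh cI => [|x t] // s3 us cs nh cI.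
  have hI : path (Irel eA) x t by move: cI; rewrite /= rcons_path => /andP[].
  rewrite -(size_map f); apply: gir; rewrite /is_cycle size_map s3.
  rewrite (uniq_mapf (fun y hy => allI hI hy) us) cycle_map.
  by apply: sub_cycle cI => p q /fI.
Qed.
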